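(* Let $p\ge 1$, let $g_2,g_4,\dots,g_{2p}$ be real numbers with $g_{2p}>0$, let $Q(x)=\sum_{j=1}^{p} g_{2j}x^{2j}$ and let $N>0$. Let $P_n(x)=x^n+\cdots$ ($n\ge 0$) be the monic orthogonal polynomials with respect to the weight $e^{-NQ(x)}$ on $\mathbb{R}$, i.e. $\int_{-\infty}^{\infty}P_k(x)P_l(x)e^{-NQ(x)}\,dx=\delta_{kl}h_k$ with $h_k>0$, and set $P_{-1}=0$. They satisfy $xP_n(x)=P_{n+1}(x)+r_nP_{n-1}(x)$ for $n\ge 0$, with $r_0=0$. For $n\ge 1$ and $j\ge 1$ put $(L^{j})_{n,n-1}=h_{n-1}^{-1}\int_{-\infty}^{\infty}x^{j}P_n(x)P_{n-1}(x)e^{-NQ(x)}\,dx$, and define the formal power series in $\lambda^{-1}$ $$U_n(\lambda)=1+2\sum_{k\ge 1}(L^{2k-1})_{n,n-1}\lambda^{-k}\quad(n\ge 1),\qquad U_0(\lambda)=1.$$ Then for every $n\ge 1$, as formal Laurent series in $\lambda^{-1}$, $$\lambda\,(U_{n+1}-U_n)=r_{n+1}(U_{n+2}+U_{n+1})-r_n(U_n+U_{n-1})$$ and $$r_n\,(U_n+U_{n-1})(U_n+U_{n+1})=\lambda\,(U_n^2-1).$$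
   Context: The recurrence coefficients $r_n$ (depending on $N$) are those of the three-term recurrence of the monic orthogonal polynomials; because $Q$ is even, no diagonal term $s_nP_n$ appears. $(L^j)_{n,n-1}$ is the $(n,n-1)$ matrix element of the $j$-th power of the Jacobi (Lax) operator $LP_n=P_{n+1}+r_nP_{n-1}$. *)

(* Defs.v *)
From HB Require Import structures.
From mathcomp Require Import all_boot all_order all_algebra.
From mathcomp Require Import all_classical all_reals all_analysis.
Set Implicit Arguments. Unset Strict Implicit. Unset Printing Implicit Defensive.
Import Order.TTheory GRing.Theory Num.Theory.
Import numFieldNormedType.Exports.
Local Open Scope classical_set_scope.
Local Open Scope ring_scope.

Section Defs.
Variable R : realType.

Definition Qpot (p : nat) (g : nat -> R) (x : R) : R :=
  \sum_(1 <= j < p.+1) g (2 * j)%N * x ^+ (2 * j).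

Definition weight (p : nat) (g : nat -> R) (N : R) (x : R) : R :=
  expR (- (N * Qpot p g x)).

Definition Lentry (p : nat) (g : nat -> R) (N : R) (P : nat -> {poly R})
  (h : nat -> R) (j n : nat) : R :=
  (h n.-1)^-1 * \int[@lebesgue_measure R]_(x in [set: R])
     (x ^+ j * (P n).[x] * (P n.-1).[x] * weight p g N x).

(* Formal power series in lambda^{-1}: f k is the coefficient of lambda^{-k}. *)
Definition fps := nat -> R.

Definition Useries (p : nat) (g : nat -> R) (N : R) (P : nat -> {poly R})
  (h : nat -> R) (n : nat) : fps :=
  fun k => if n == 0%N then (if k == 0%N then 1 else 0)
           else if k == 0%N then 1 else 2 * Lentry p g N P h (2 * k).-1 n.

Definition fps_add (f g : fps) : fps := fun k => f k + g k.
Definition fps_sub (f g : fps) : fps := fun k => f k - g k.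
Definition fps_scale (c : R) (f : fps) : fps := fun k => c * f k.
Definition fps_mul (f g : fps) : fps :=
  fun k => \sum_(i < k.+1) f i * g (k - i)%N.
Definition fps_one : fps := fun k => if k == 0%N then 1 else 0.

(* Formal Laurent series in lambda^{-1}: F i is the coefficient of lambda^i
   (i : int); power series embed with nonpositive exponents. *)
Definition laurent := int -> R.
Definition toL (f : fps) : laurent :=
  fun i => if (i <= 0)%R then f `|i|%N else 0.
Definition lamL (F : laurent) : laurent := fun i => F (i - 1)%R.

End Defs.

(* Main.v *)
Require Import Defs.
From HB Require Import structures.
From mathcomp Require Import all_boot all_order all_algebra.
From mathcomp Require Import all_classical all_reals all_analysis.
From mathcomp Require Import measurable_realfun.
From mathcomp Require Import ring lra zify.
Import Order.TTheory GRing.Theory Num.Theory.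
Import numFieldNormedType.Exports.
Local Open Scope classical_set_scope.
Local Open Scope ring_scope.
Section MeasPart.
Variables (R : realType) (p : nat) (g : nat -> R) (N : R) (P : nat -> {poly R}) (h : nat -> R).
Notation mu := (@lebesgue_measure R).
Notation w := (weight p g N).
Hypothesis horth : forall k l,
     (\int[mu]_(x in [set: R])
        ((P k).[x] * (P l).[x] * w x)%:E)%E
     = (if k == l then h k else 0)%:E.

Lemma meas_w : measurable_fun setT w.
Proof.
pose q : {poly R} := \sum_(1 <= j < p.+1) g (2 * j)%N *: 'X^(2 * j).
have -> : w = expR \o horner (- (N *: q)).
  apply/funext => x; rewrite /weight /Qpot /= hornerN hornerZ horner_sum.
  by congr (expR (- (N * _))); apply: eq_bigr => j _; rewrite hornerZ hornerXn.
apply: measurableT_comp; first exact: measurable_realfun.measurable_expR.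
by apply: measurable_realfun.continuous_measurable_fun; exact: continuous_horner.
Qed.

Lemma meas_F k l : measurable_fun setT (fun x => (P k).[x] * (P l).[x] * w x).
Proof.
apply: measurable_realfun.measurable_funM; last exact: meas_w.
by apply: measurable_realfun.measurable_funM; by apply: measurable_realfun.continuous_measurable_fun; exact: continuous_horner.
Qed.

Lemma w_ge0 x : 0 <= w x.
Proof. by rewrite /weight ltW // expR_gt0. Qed.

Lemma int_sq k : mu.-integrable setT (EFin \o (fun x => (P k).[x] * (P k).[x] * w x)).
Proof.
apply/integrableP; split; first by apply/measurable_EFinP; exact: meas_F.
have -> : (fun x => `|(EFin \o (fun x => ((P k).[x] * (P k).[x] * w x)%R)) x|%E)
   = (fun x => (((P k).[x] * (P k).[x] * w x)%R)%:E).
  apply/funext => x /=; rewrite ger0_norm //.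
  by rewrite mulr_ge0 // ?w_ge0 // -expr2 sqr_ge0.
by rewrite horth eqxx ltry.
Qed.

Lemma int_F k l : mu.-integrable setT (EFin \o (fun x => (P k).[x] * (P l).[x] * w x)).
Proof.
apply: (@le_integrable _ _ _ mu setT measurableT _
   (EFin \o (fun x => (P k).[x] * (P k).[x] * w x + (P l).[x] * (P l).[x] * w x))).
- by apply/measurable_EFinP; exact: meas_F.
- move=> x _ /=; rewrite lee_fin.
  set a := (P k).[x]; set b := (P l).[x]; have w0 := w_ge0 x.
  rewrite [X in _ <= X]ger0_norm; last by rewrite addr_ge0 // mulr_ge0 // -expr2 sqr_ge0.
  rewrite !normrM (ger0_norm w0) -mulrDl ler_wpM2r //.
  have := sqr_ge0 (`|a| - `|b|); rewrite sqrrB -!expr2 !real_normK ?num_real //.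
  have := normr_ge0 a; have := normr_ge0 b; nra.
- have -> : (EFin \o (fun x => (P k).[x] * (P k).[x] * w x + (P l).[x] * (P l).[x] * w x))
     = (EFin \o (fun x => (P k).[x] * (P k).[x] * w x)) \+ (EFin \o (fun x => (P l).[x] * (P l).[x] * w x)).
    by apply/funext => x /=; rewrite EFinD.
  by apply: integrableD => //; exact: int_sq.
Qed.

Lemma Rint_sum (c : nat -> R) (F : nat -> R -> R) :
  (forall m, mu.-integrable setT (EFin \o F m)) ->
  forall B, mu.-integrable setT (EFin \o (fun x => \sum_(m < B) c m * F m x)) /\
   \int[mu]_(x in setT) (\sum_(m < B) c m * F m x) = \sum_(m < B) c m * \int[mu]_(x in setT) F m x.
Proof.
move=> iF; elim=> [|B [iB eB]].
  split.
    have -> : (EFin \o (fun x => \sum_(m < 0) c m * F m x)) = cst 0%E.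
      by apply/funext => x /=; rewrite big_ord0.
    exact: integrable0.
  rewrite big_ord0 /Rintegral.
  under eq_integral do rewrite big_ord0.
  by rewrite integral0.
have iC : mu.-integrable setT (EFin \o (fun x => c B * F B x)).
  have -> : (EFin \o (fun x => c B * F B x)) = (fun x => ((c B)%:E * (EFin \o F B) x)%E).
    by apply/funext => x /=; rewrite EFinM.
  exact: integrableZl.
split.
  have -> : (EFin \o (fun x => \sum_(m < B.+1) c m * F m x)) =
     (EFin \o (fun x => \sum_(m < B) c m * F m x)) \+ (EFin \o (fun x => c B * F B x)).
    by apply/funext => x /=; rewrite big_ord_recr EFinD.
  exact: integrableD.
rewrite big_ord_recr /=.
under eq_Rintegral do rewrite big_ord_recr /=.
by rewrite RintegralD // eB RintegralZl.
Qed.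

Variable r : nat -> R.
Hypothesis hrec : forall n, 'X * P n = P n.+1 + r n *: P n.-1.

Fixpoint Cc (j : nat) (n m : nat) : R :=
  match j with
  | 0 => if n == m then 1 else 0
  | j'.+1 => Cc j' n.+1 m + r n * Cc j' n.-1 m
  end.

Lemma expand j : forall n B, (n + j < B)%N ->
  'X^j * P n = \sum_(m < B) Cc j n m *: P m.
Proof.
elim: j => [|j IH] n B hB.
  rewrite expr0 mul1r addn0 in hB *.
  rewrite (bigD1 (Ordinal hB)) //= eqxx scale1r big1 ?addr0 // => i hi.
  have -> : (n == i) = false.
    apply/negbTE; apply: contra hi => /eqP hn; apply/eqP/val_inj => /=; by rewrite hn.
  by rewrite scale0r.
rewrite exprSr -mulrA hrec mulrDr -scalerAr (IH n.+1 B) ?(IH n.-1 B); last 2 first.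
- by move: hB; case: n => //= n; lia.
- by move: hB; lia.
rewrite scaler_sumr -big_split /=; apply: eq_bigr => i _.
by rewrite scalerA -scalerDl.
Qed.

Lemma Iform j a b :
  \int[mu]_(x in setT) (x ^+ j * (P a).[x] * (P b).[x] * w x) = Cc j a b * h b.
Proof.
have hB : (a + j < (a + j + b).+1)%N by lia.
rewrite (@eq_Rintegral _ _ _ mu setT (fun x => \sum_(m < (a + j + b).+1)
           Cc j a m * ((P m).[x] * (P b).[x] * w x))); last first.
  move=> x _.
  have -> : x ^+ j * (P a).[x] = ('X^j * P a).[x] by rewrite hornerM hornerXn.
  rewrite (@expand j a _ hB) horner_sum mulr_suml mulr_suml; apply: eq_bigr => i _.
  by rewrite hornerZ !mulrA.
have [_ ->] := Rint_sum (Cc j a) (fun m x => (P m).[x] * (P b).[x] * w x)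
   (fun m => int_F m b) (a + j + b).+1.
have hb : (b < (a + j + b).+1)%N by lia.
rewrite (bigD1 (Ordinal hb)) //= /Rintegral horth eqxx /= big1 ?addr0 // => i hi.
rewrite horth; have -> : (val i == b) = false.
  apply/negbTE; apply: contra hi => /eqP hn; apply/eqP/val_inj => /=; by rewrite hn.
by rewrite /= mulr0.
Qed.

End MeasPart.
Arguments Cc {R}.

Section CcProps.
Variables (R : realType) (r : nat -> R).
Hypothesis r0 : r 0%N = 0.

Definition Rop (f : nat -> nat -> R) n m :=
  (if m is m'.+1 then f n m' else 0) + r m.+1 * f n m.+1.

Lemma Cc_S j n m : Cc r j.+1 n m = Cc r j n.+1 m + r n * Cc r j n.-1 m.
Proof. by []. Qed.

Lemma Cc_right j n m : Cc r j.+1 n m = Rop (Cc r j) n m.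
Proof.
elim: j n m => [|j IH] n m.
  rewrite Cc_S /Rop /=.
  case: n => [|n]; case: m => [|m] /=.
  - by rewrite r0 mul0r mulr0.
  - by rewrite !mulr0 !addr0 eqSS.
  - by case: n => [|n] /=; rewrite ?mulr0.
  - rewrite !eqSS; have [->|hne] := eqVneq n m.+1; first by rewrite ?eqxx.
    by rewrite !mulr0.
rewrite Cc_S !IH /Rop; case: m => [|m]; rewrite !Cc_S; ring.
Qed.

End CcProps.
Section Alg.
Variable R : realType.
Implicit Types f g : fps R.

Definition sh f : fps R := fun k => if k == 0%N then 0 else f k.-1.
Definition Bf f : fps R := fps_add (fps_one R) (sh f).

Lemma fmulC f g : fps_mul f g = fps_mul g f.
Proof.
apply/funext => k; rewrite /fps_mul.
rewrite (reindex_inj rev_ord_inj) /=; apply: eq_bigr => i _.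
by rewrite subKn 1?mulrC // -ltnS.
Qed.

Lemma fmulDl f g (h : fps R) : fps_mul (fps_add f g) h = fps_add (fps_mul f h) (fps_mul g h).
Proof. by apply/funext => k; rewrite /fps_mul /fps_add -big_split; apply: eq_bigr => i _; rewrite mulrDl. Qed.

Lemma fmulBl f g (h : fps R) : fps_mul (fps_sub f g) h = fps_sub (fps_mul f h) (fps_mul g h).
Proof. by apply/funext => k; rewrite /fps_mul /fps_sub -sumrB; apply: eq_bigr => i _; rewrite mulrBl. Qed.

Lemma fmulZl c f g : fps_mul (fps_scale c f) g = fps_scale c (fps_mul f g).
Proof. by apply/funext => k; rewrite /fps_mul /fps_scale mulr_sumr; apply: eq_bigr => i _; rewrite mulrA. Qed.

Lemma fmul1l f : fps_mul (fps_one R) f = f.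
Proof.
apply/funext => k; rewrite /fps_mul big_ord_recl /= subn0 mul1r big1 ?addr0 //.
by move=> i _; rewrite /fps_one /= mul0r.
Qed.

Lemma fmulshl f g : fps_mul (sh f) g = sh (fps_mul f g).
Proof.
apply/funext => k; rewrite /fps_mul /sh; case: k => [|k] /=.
  by rewrite big_ord_recl big_ord0 /= mul0r addr0.
by rewrite big_ord_recl /= mul0r add0r; apply: eq_bigr => i _.
Qed.

Lemma fmulDr f g (h : fps R) : fps_mul h (fps_add f g) = fps_add (fps_mul h f) (fps_mul h g).
Proof. by rewrite fmulC fmulDl (fmulC f h) (fmulC g h). Qed.
Lemma fmul1r f : fps_mul f (fps_one R) = f.
Proof. by rewrite fmulC fmul1l. Qed.
Lemma fmulshr f g : fps_mul g (sh f) = sh (fps_mul g f).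
Proof. by rewrite fmulC fmulshl fmulC. Qed.

Variables (r : nat -> R) (a d : nat -> fps R).
Hypothesis r0 : r 0%N = 0.
Hypothesis ha0 : forall k, a 0%N k = 0.
Hypothesis hc : forall n, d n = fps_add (Bf (a n)) (sh (a n.+1)).
Hypothesis hab : forall n, fps_scale (r n.+1) (d n.+1) =
   fps_add (fps_sub (a n.+1) (a n)) (fps_scale (r n) (d n.-1)).

Lemma I1 n : fps_scale (r n) (fps_mul (d n) (d n.-1)) = fps_mul (a n) (Bf (a n)).
Proof.
elim: n => [|n IH].
  apply/funext => k; rewrite /fps_scale r0 mul0r /fps_mul big1 // => i _.
  by rewrite ha0 mul0r.
rewrite -fmulZl hab fmulDl fmulZl (fmulC (d n.-1)) IH [d n]hc /Bf.
rewrite !fmulDr !fmul1r !fmulshr !fmulBl.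
apply/funext => k; rewrite /fps_add /fps_sub /sh /fps_one (fmulC (a n) (a n.+1)).
case: k => [|k] /=; ring.
Qed.

End Alg.
Arguments sh {R}.
Arguments Bf {R}.
Arguments fmulC {R}.
Arguments fmulZl {R}.
Arguments fmulBl {R}.
Arguments fmulDl {R}.
Arguments fmulDr {R}.
Arguments fmul1l {R}.
Arguments fmul1r {R}.
Arguments fmulshl {R}.
Arguments fmulshr {R}.
Lemma lamL_toL_eq (R : realType) (F G : fps R) : F 0%N = 0 -> (forall k, F k.+1 = G k) ->
  lamL (toL F) = toL G.
Proof.
move=> F0 FG; apply/funext => i; rewrite /lamL /toL.
case: (lerP i 0) => hi.
  have -> : (i - 1 <= 0) = true by lia.
  have -> : `|i - 1|%N = (`|i|%N).+1 by lia.
  exact: FG.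
case: (eqVneq i 1) => [->|hi1].
  by rewrite subrr lexx.
have -> : (i - 1 <= 0) = false by lia.
by [].
Qed.

Arguments Cc {R} r j n m : simpl never.
Lemma Cc_0 (R : realType) (r : nat -> R) n m : Cc r 0 n m = if n == m then 1 else 0.
Proof. by []. Qed.
Lemma neqS2 m : (m.+2 == m) = false. Proof. by elim: m. Qed.
Lemma neqP2 m : (m.-1 == m.+1) = false. Proof. by case: m => //; elim. Qed.
Theorem theorem1 (R : realType) (p : nat) (g : nat -> R) (N : R)
  (P : nat -> {poly R}) (h : nat -> R) (r : nat -> R) :
  (1 <= p)%N ->
  0 < g (2 * p)%N ->
  0 < N ->
  (* P_n monic of degree n *)
  (forall n, P n \is monic /\ size (P n) = n.+1) ->
  (* orthogonality with positive norms h_k *)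
  (forall k, 0 < h k) ->
  (forall k l,
     (\int[@lebesgue_measure R]_(x in [set: R])
        ((P k).[x] * (P l).[x] * weight p g N x)%:E)%E
     = (if k == l then h k else 0)%:E) ->
  (* three-term recurrence x P_n = P_{n+1} + r_n P_{n-1}, P_{-1} = 0, r_0 = 0 *)
  r 0%N = 0 ->
  'X * P 0%N = P 1%N ->
  (forall n, 'X * P n.+1 = P n.+2 + r n.+1 *: P n) ->
  let U := Useries p g N P h in
  forall n, (1 <= n)%N ->
    lamL (toL (fps_sub (U n.+1) (U n)))
      = toL (fps_sub (fps_scale (r n.+1) (fps_add (U n.+2) (U n.+1)))
                     (fps_scale (r n) (fps_add (U n) (U n.-1))))
    /\
    toL (fps_scale (r n) (fps_mul (fps_add (U n) (U n.-1)) (fps_add (U n) (U n.+1))))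
      = lamL (toL (fps_sub (fps_mul (U n) (U n)) (fps_one R))).
Proof.
move=> hp hg hN hmon hh horth r0 h0 hS U n hn.
have hrec : forall n, 'X * P n = P n.+1 + r n *: P n.-1.
  by case=> [|m]; [rewrite r0 scale0r addr0 | exact: hS].
have IF := @Iform R p g N P h horth r hrec.
have Hsym : forall j a b, Cc r j a b * h b = Cc r j b a * h a.
  move=> j a b; rewrite -!IF; apply: eq_Rintegral => x _; ring.
have Hr : forall m, r m.+1 * h m = h m.+1.
  move=> m; have := Hsym 1%N m.+1 m.
  rewrite !Cc_S !Cc_0 /= !eqxx neqS2 neqP2 add0r mulr1 mulr0 addr0 mul1r.
  by [].
have hpos : forall m, h m != 0 by move=> m; rewrite gt_eqF.
have Hsym2 : forall j m, r m.+1 * Cc r j m m.+1 = Cc r j m.+1 m.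
  move=> j m; apply: (mulIf (hpos m)).
  have := Hsym j m.+1 m; rewrite -Hr => ->; ring.
have HL : forall j m, Lentry p g N P h j m.+1 = Cc r j m.+1 m.
  by move=> j m; rewrite /Lentry /= IF mulrC mulfK.
pose a : nat -> fps R := fun m k => if m == 0%N then 0 else Cc r (2 * k).+1 m m.-1.
pose d : nat -> fps R := fun m k => Cc r (2 * k) m m.
have Hc : forall m, d m = fps_add (Bf (a m)) (sh (a m.+1)).
  move=> m; apply/funext => k; rewrite /d /a /Bf /fps_add /fps_one /sh.
  case: k => [|k] /=.
    by rewrite Cc_0 eqxx !addr0.
  have -> : (2 * k.+1 = (2 * k).+2)%N by lia.
  rewrite Cc_S; case: m => [|m] /=.
    by rewrite r0 mul0r addr0 !add0r.
  by rewrite Hsym2 add0r addrC.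
have Hab : forall m, fps_scale (r m.+1) (d m.+1) =
   fps_add (fps_sub (a m.+1) (a m)) (fps_scale (r m) (d m.-1)).
  move=> m; apply/funext => k; rewrite /fps_scale /fps_add /fps_sub /d /a /=.
  rewrite Cc_right // /Rop; case: m => [|m] /=.
    by rewrite r0 mul0r add0r subr0 addr0.
  rewrite Cc_S; ring.
have HI1 := @I1 R r a d r0 (fun k => erefl) Hc Hab.
have HU : forall m, U m = fps_sub (fps_scale 2 (Bf (a m))) (fps_one R).
  move=> m; apply/funext => k.
  rewrite /U /Useries /fps_sub /fps_scale /Bf /fps_add /fps_one /sh /a.
  case: m => [|m]; case: k => [|k] /=; try ring.
  rewrite HL; have -> : (k + 1 * k.+1)%coq_nat = (2 * k).+1 by lia.
  ring.
have Hadd : forall m, fps_add (U m) (U m.+1) = fps_scale 2 (d m).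
  move=> m; rewrite !HU Hc; apply/funext => k.
  by rewrite /fps_add /fps_sub /fps_scale /Bf /fps_add /fps_one /sh; case: k => [|k] /=; ring.
have E1 : fps_add (U n.+2) (U n.+1) = fps_scale 2 (d n.+1).
  by rewrite -Hadd; apply/funext => i; rewrite /fps_add addrC.
have E2 : fps_add (U n) (U n.-1) = fps_scale 2 (d n.-1).
  case: n hn {E1} => // m _ /=; rewrite -Hadd; apply/funext => i; rewrite /fps_add addrC.
  by [].
split.
  apply: lamL_toL_eq.
    by rewrite /fps_sub !HU /fps_sub /fps_scale /Bf /fps_add /fps_one /sh /=; ring.
  move=> k; rewrite E1 E2.
  have H := congr1 (fun f => f k) (Hab n).
  rewrite /fps_scale /fps_add /fps_sub /= in H.
  rewrite !HU /fps_sub /fps_scale /fps_add /Bf /sh /fps_one /fps_add /=.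
  rewrite [r n.+1 * _]mulrCA [r n * _]mulrCA H; ring.
have BB : fps_mul (Bf (a n)) (Bf (a n)) = fps_add (Bf (a n)) (sh (fps_mul (Bf (a n)) (a n))).
  by rewrite [X in fps_mul _ X]/Bf fmulDr fmul1r fmulshr.
symmetry; apply: lamL_toL_eq.
  rewrite /fps_sub /fps_mul big_ord1 HU /fps_sub /fps_scale /Bf /fps_add /fps_one /sh /=; ring.
move=> k; rewrite E2 Hadd fmulZl (fmulC (d n.-1)) fmulZl.
have H := congr1 (fun f => f k) (HI1 n).
rewrite /fps_scale /= in H.
rewrite HU fmulBl fmul1l fmulZl (fmulC (Bf (a n))) fmulBl fmulZl fmul1l BB (fmulC (Bf (a n)) (a n)).
rewrite /fps_scale /fps_sub /fps_add /sh /Bf /fps_add /fps_one /sh /=.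
rewrite [r n * _]mulrCA [r n * _]mulrCA H; ring.
Qed.
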